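(* Let $a,b\in\{1,2,3\}$ with $a\neq b$, and let $P\in R$ not depend on $x_{a4}$ and satisfy $DP=D_1P=D_2P=D_3P=D_4P=0$. Then there exists $Q\in R$ not depending on $x_{a4}$ with $\partial_{b4}Q=P$ and $DQ=D_1Q=D_2Q=D_3Q=D_4Q=0$.
   Context: $R=\mathbb C[x_1,x_2,x_3,x_4,x_{12},x_{13},x_{14},x_{23},x_{24},x_{34}]$ (i.e. $\mathrm{Sym}(\mathbb C^4)\otimes\mathrm{Sym}(\Lambda^2\mathbb C^4)$), $\partial_i=\partial/\partial x_i$, $\partial_{ij}=\partial/\partial x_{ij}$, $D=\partial_{12}\partial_{34}-\partial_{13}\partial_{24}+\partial_{14}\partial_{23}$, $D_1=\partial_{23}\partial_4-\partial_{24}\partial_3+\partial_{34}\partial_2$, $D_2=\partial_{13}\partial_4-\partial_{14}\partial_3+\partial_{34}\partial_1$, $D_3=\partial_{12}\partial_4-\partial_{14}\partial_2+\partial_{24}\partial_1$, $D_4=\partial_{12}\partial_3-\partial_{13}\partial_2+\partial_{23}\partial_1$. *)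

(* Defs.v *)
(* polynomial ring R = C[x1..x4, x12,...,x34] as {mpoly C[10]},
   with C := R[i] (complex numbers over an arbitrary realType R, i.e. over the reals). *)
From mathcomp Require Import all_boot all_algebra.
From mathcomp Require Import reals.
From mathcomp.real_closed Require Import complex.
From mathcomp Require Import mpoly.
Set Implicit Arguments. Unset Strict Implicit. Unset Printing Implicit Defensive.
Import GRing.Theory.
Local Open Scope ring_scope.

(* Variable indexing (0-based):
   x1 x2 x3 x4 x12 x13 x14 x23 x24 x34
    0  1  2  3   4   5   6   7   8   9 *)
Definition vx (i : nat) : 'I_10 := inord i.-1.
Definition vxx (i j : nat) : 'I_10 :=                   (* x_ij, i<j *)
  inord (match i, j with
         | 1, 2 => 4 | 1, 3 => 5 | 1, 4 => 6
         | 2, 3 => 7 | 2, 4 => 8 | _, _ => 9 end).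

Section Ops.
Variable C : comRingType.
Notation RR := {mpoly C[10]}.

Definition d1 (i : nat) (p : RR) : RR := mderiv (vx i) p.
Definition d2 (i j : nat) (p : RR) : RR := mderiv (vxx i j) p.

Definition Dop (p : RR) : RR :=
  d2 1 2 (d2 3 4 p) - d2 1 3 (d2 2 4 p) + d2 1 4 (d2 2 3 p).
Definition D1op (p : RR) : RR :=
  d2 2 3 (d1 4 p) - d2 2 4 (d1 3 p) + d2 3 4 (d1 2 p).
Definition D2op (p : RR) : RR :=
  d2 1 3 (d1 4 p) - d2 1 4 (d1 3 p) + d2 3 4 (d1 1 p).
Definition D3op (p : RR) : RR :=
  d2 1 2 (d1 4 p) - d2 1 4 (d1 2 p) + d2 2 4 (d1 1 p).
Definition D4op (p : RR) : RR :=
  d2 1 2 (d1 3 p) - d2 1 3 (d1 2 p) + d2 2 3 (d1 1 p).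

Definition indep_of (v : 'I_10) (p : RR) : Prop :=
  forall m, m \in msupp p -> m v = 0%N.

Definition annihilated (p : RR) : Prop :=
  [/\ Dop p = 0, D1op p = 0, D2op p = 0, D3op p = 0 & D4op p = 0].
End Ops.

(* Main.v *)
Require Import Defs.
From mathcomp Require Import all_boot all_order all_algebra.
From mathcomp Require Import reals.
From mathcomp.real_closed Require Import complex.
From mathcomp Require Import mpoly.
From mathcomp Require Import ring.
Set Implicit Arguments. Unset Strict Implicit. Unset Printing Implicit Defensive.
Import Order.TTheory GRing.Theory Num.Theory.
Local Open Scope ring_scope.

Definition v0 : 'I_10 := @Ordinal 10 0 isT.
Definition v1 : 'I_10 := @Ordinal 10 1 isT.
Definition v2 : 'I_10 := @Ordinal 10 2 isT.
Definition v3 : 'I_10 := @Ordinal 10 3 isT.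
Definition v4 : 'I_10 := @Ordinal 10 4 isT.
Definition v5 : 'I_10 := @Ordinal 10 5 isT.
Definition v6 : 'I_10 := @Ordinal 10 6 isT.
Definition v7 : 'I_10 := @Ordinal 10 7 isT.
Definition v8 : 'I_10 := @Ordinal 10 8 isT.
Definition v9 : 'I_10 := @Ordinal 10 9 isT.

Lemma vxE : [/\ vx 1 = v0, vx 2 = v1, vx 3 = v2 & vx 4 = v3].
Proof. by split; apply/val_inj; rewrite /= inordK. Qed.
Lemma vxxE : [/\ vxx 1 2 = v4, vxx 1 3 = v5, vxx 1 4 = v6 & vxx 2 3 = v7].
Proof. by split; apply/val_inj; rewrite /= inordK. Qed.
Lemma vxxE' : vxx 2 4 = v8 /\ vxx 3 4 = v9.
Proof. by split; apply/val_inj; rewrite /= inordK. Qed.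

Definition mfact (m : 'X_{1..10}) : nat := \prod_(i < 10) (m i)`!.

Lemma mfact_gt0 m : (0 < mfact m)%N.
Proof. by rewrite /mfact; apply/prodn_gt0 => i; apply: fact_gt0. Qed.

Lemma mfactU m v : mfact (m + U_(v))%MM = (mfact m * (m v).+1)%N.
Proof.
rewrite /mfact (bigD1 v) //= [in RHS](bigD1 v) //= mnmDE mnm1E eqxx addn1 factS.
rewrite (eq_bigr (fun i => (m i)`!)); last first.
  by move=> i ne; rewrite mnmDE mnm1E eq_sym (negbTE ne) addn0.
by rewrite [RHS]mulnC mulnA.
Qed.

Section Gen.
Variable C : numFieldType.
Notation PP := {mpoly C[10]}.

Definition G (F : PP) m := F@_m * (mfact m)%:R.

Lemma mfact_neq0 m : ((mfact m)%:R : C) != 0.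
Proof. by rewrite pnatr_eq0 -lt0n mfact_gt0. Qed.

Lemma G_dd (F : PP) v w m : v != w ->
  (mderiv v (mderiv w F))@_m * (mfact m)%:R = G F (m + U_(v) + U_(w))%MM.
Proof.
move=> ne; rewrite /G !mcoeff_mderiv mfactU mfactU mnmDE mnm1E (negbTE ne) addn0.
rewrite -mulrnA mulrnAl -[(_ * _) *+ _]mulr_natr -mulrA -natrM.
by congr (_ * _%:R); rewrite mulnA [(_ * _ * _)%N]mulnAC.
Qed.

Definition op3 a1 b1 a2 b2 a3 b3 (p : PP) :=
  mderiv a1 (mderiv b1 p) - mderiv a2 (mderiv b2 p) + mderiv a3 (mderiv b3 p).

Lemma op3E a1 b1 a2 b2 a3 b3 (p : PP) : a1 != b1 -> a2 != b2 -> a3 != b3 ->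
  (op3 a1 b1 a2 b2 a3 b3 p = 0) <->
  (forall m, G p (m + U_(a1) + U_(b1))%MM - G p (m + U_(a2) + U_(b2))%MM
             + G p (m + U_(a3) + U_(b3))%MM = 0).
Proof.
move=> n1 n2 n3.
have key m : (op3 a1 b1 a2 b2 a3 b3 p)@_m * (mfact m)%:R =
   G p (m + U_(a1) + U_(b1))%MM - G p (m + U_(a2) + U_(b2))%MM
             + G p (m + U_(a3) + U_(b3))%MM.
  by rewrite /op3 mcoeffD mcoeffB mulrDl mulrBl !G_dd.
split=> [h m|h]; first by rewrite -key h mcoeff0 mul0r.
apply/mpolyP => m; rewrite mcoeff0; apply/eqP.
by rewrite -(mulIr_eq0 _ (mulIf (mfact_neq0 m))) key h.
Qed.

End Gen.

Definition pr (r : 'I_5) (k : 'I_3) : 'I_10 * 'I_10 :=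
  match val r, val k with
  | 0, 0 => (v4, v9) | 0, 1 => (v5, v8) | 0, _ => (v6, v7)
  | 1, 0 => (v7, v3) | 1, 1 => (v8, v2) | 1, _ => (v9, v1)
  | 2, 0 => (v5, v3) | 2, 1 => (v6, v2) | 2, _ => (v9, v0)
  | 3, 0 => (v4, v3) | 3, 1 => (v6, v1) | 3, _ => (v8, v0)
  | _, 0 => (v4, v2) | _, 1 => (v5, v1) | _, _ => (v7, v0)
  end.

Definition k0 : 'I_3 := @Ordinal 3 0 isT.
Definition k1 : 'I_3 := @Ordinal 3 1 isT.
Definition k2 : 'I_3 := @Ordinal 3 2 isT.

Section RelSec.
Variable V : zmodType.
Implicit Types g : 'X_{1..10} -> V.

Definition rel3 g r m k := g (m + U_((pr r k).1) + U_((pr r k).2))%MM.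

Definition RelG g := forall r m, rel3 g r m k0 - rel3 g r m k1 + rel3 g r m k2 = 0.

Lemma rel3_other g r m (k : 'I_3) : RelG g ->
  (forall k' : 'I_3, k' != k -> rel3 g r m k' = 0) -> rel3 g r m k = 0.
Proof.
move=> hR h; have := hR r m.
case: k h => [[|[|[|//]]] hk] h.
- by rewrite (h k1) // (h k2) // subr0 addr0.
- by rewrite (h k0) // (h k2) // sub0r addr0 => /eqP; rewrite oppr_eq0 => /eqP.
- by rewrite (h k0) // (h k1) // subr0 add0r.
Qed.
End RelSec.

Lemma annihilatedE (C : numFieldType) (F : {mpoly C[10]}) :
  annihilated F <-> RelG (G F).
Proof.
have [e12 e13 e14 e23] := vxxE; have [e24 e34] := vxxE'; have [e1 e2 e3 e4] := vxE.
have eD : Dop F = op3 v4 v9 v5 v8 v6 v7 F by rewrite /Dop /op3 /d2 e12 e13 e14 e23 e24 e34.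
have eD1 : D1op F = op3 v7 v3 v8 v2 v9 v1 F by rewrite /D1op /op3 /d2 /d1 e23 e24 e34 e2 e3 e4.
have eD2 : D2op F = op3 v5 v3 v6 v2 v9 v0 F by rewrite /D2op /op3 /d2 /d1 e13 e14 e34 e1 e3 e4.
have eD3 : D3op F = op3 v4 v3 v6 v1 v8 v0 F by rewrite /D3op /op3 /d2 /d1 e12 e14 e24 e1 e2 e4.
have eD4 : D4op F = op3 v4 v2 v5 v1 v7 v0 F by rewrite /D4op /op3 /d2 /d1 e12 e13 e23 e1 e2 e3.
rewrite /annihilated eD eD1 eD2 eD3 eD4; split.
  case=> /op3E h0 /op3E h1 /op3E h2 /op3E h3 /op3E h4.
  case=> [[|[|[|[|[|//]]]]] hr] m; rewrite /rel3 /=.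
  exact: h0. exact: h1. exact: h2. exact: h3. exact: h4.
move=> h; split; apply/op3E => // m.
- exact: (h (@Ordinal 5 0 isT) m).
- exact: (h (@Ordinal 5 1 isT) m).
- exact: (h (@Ordinal 5 2 isT) m).
- exact: (h (@Ordinal 5 3 isT) m).
- exact: (h (@Ordinal 5 4 isT) m).
Qed.

Definition lo (v : 'I_10) : nat :=
  match val v with 0 => 0 | 1 => 1 | 2 => 2 | 3 => 3 | 4 => 0 | 5 => 0 | 6 => 0
  | 7 => 1 | 8 => 1 | _ => 2 end.
Definition hi (v : 'I_10) : nat :=
  match val v with 0 => 4 | 1 => 4 | 2 => 4 | 3 => 4 | 4 => 1 | 5 => 2 | 6 => 3
  | 7 => 2 | 8 => 3 | _ => 3 end.

Definition r0 : 'I_5 := @Ordinal 5 0 isT.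
Definition r1 : 'I_5 := @Ordinal 5 1 isT.
Definition r2 : 'I_5 := @Ordinal 5 2 isT.
Definition r3 : 'I_5 := @Ordinal 5 3 isT.
Definition r4 : 'I_5 := @Ordinal 5 4 isT.
Definition ords10 := [:: v0; v1; v2; v3; v4; v5; v6; v7; v8; v9].
Definition ords5 := [:: r0; r1; r2; r3; r4].
Definition ords3 := [:: k0; k1; k2].
Lemma mem10 v : v \in ords10.
Proof. by case: v => [[|[|[|[|[|[|[|[|[|[|//]]]]]]]]]] ?]. Qed.
Lemma mem5 v : v \in ords5.
Proof. by case: v => [[|[|[|[|[|//]]]]] ?]. Qed.
Lemma mem3 v : v \in ords3.
Proof. by case: v => [[|[|[|//]]] ?]. Qed.

Section Uniq.
Local Open Scope nat_scope.
Variable rk : nat -> nat.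
Variable zv : 'I_10.

Definition fstl (v : 'I_10) := if rk (lo v) < rk (hi v) then lo v else hi v.
Definition sndl (v : 'I_10) := if rk (lo v) < rk (hi v) then hi v else lo v.
Definition cmpb (v w : 'I_10) :=
  ((rk (fstl v) <= rk (fstl w)) && (rk (sndl v) <= rk (sndl w))) ||
  ((rk (fstl w) <= rk (fstl v)) && (rk (sndl w) <= rk (sndl v))).
Definition wt (v : 'I_10) := ((rk (sndl v) - rk (fstl v)) ^ 2)%N.
Definition chainb (m : 'X_{1..10}) :=
  (m zv == 0%N) && [forall v, forall w, ((0 < m v) && (0 < m w))%N ==> cmpb v w].
Definition matchk (r : 'I_5) (k : 'I_3) (v w : 'I_10) :=
  ((pr r k == (v, w)) || (pr r k == (w, v))) &&
  all (fun k' : 'I_3 => (k' != k) ==> (wt (pr r k').1 + wt (pr r k').2 < wt v + wt w)%N) ords3.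
Definition redok := all (fun v => all (fun w =>
  ((v != zv) && (w != zv) && ~~ cmpb v w) ==>
    has (fun r => has (fun k => matchk r k v w) ords3) ords5) ords10) ords10.

Definition mu (m : 'X_{1..10}) := (\sum_(v < 10) m v * wt v)%N.

Lemma muD m1 m2 : mu (m1 + m2)%MM = (mu m1 + mu m2)%N.
Proof. by rewrite /mu -big_split; apply: eq_bigr => v _; rewrite mnmDE mulnDl. Qed.

Lemma muU v : mu U_(v)%MM = wt v.
Proof.
rewrite /mu (bigD1 v) //= big1 ?addn0; first by rewrite mnm1E eqxx mul1n.
by move=> w ne; rewrite mnm1E eq_sym (negbTE ne).
Qed.

Lemma cmpb_refl v : cmpb v v.
Proof. by rewrite /cmpb !leqnn. Qed.

Lemma uniq_G (V : zmodType) (g : 'X_{1..10} -> V) : redok -> RelG g ->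
  (forall m : 'X_{1..10}, (0 < m zv)%N -> g m = 0%R) -> (forall m, chainb m -> g m = 0%R) ->
  forall m, g m = 0%R.
Proof.
move=> hred hR hz hc.
suff h: forall n m, (mu m < n)%N -> g m = 0%R by move=> m; apply: (h (mu m).+1).
elim=> [//|n IH] m hm.
case: (posnP (m zv)) => [mz0|mzpos]; last exact: hz.
case: (boolP (chainb m)) => [|nch]; first exact: hc.
move: nch; rewrite /chainb mz0 eqxx /= negb_forall => /existsP [v].
rewrite negb_forall => /existsP [w]; rewrite negb_imply => /andP [/andP [mv mw] ncomp].
have nevw : v != w by apply: contraNneq ncomp => ->; rewrite cmpb_refl.
have nevz : v != zv by apply: contraTneq mv => ->; rewrite mz0.
have newz : w != zv by apply: contraTneq mw => ->; rewrite mz0.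
have hh : (v != zv) && (w != zv) && ~~ cmpb v w by rewrite nevz newz ncomp.
have /seq.allP/(_ v (mem10 v)) /seq.allP/(_ w (mem10 w)) /implyP /(_ hh)
  /seq.hasP [r _ /seq.hasP [k _]] := hred.
case/andP => hpair /seq.allP hlt.
set m' := (m - U_(v) - U_(w))%MM.
have em : m = (m' + U_(v) + U_(w))%MM.
  apply/mnmP => i; rewrite !mnmDE !mnmBE !mnm1E.
  case: (eqVneq v i) => [<-|nvi].
    by rewrite [w == v]eq_sym (negbTE nevw) subn0 addn0 subn1 addn1 prednK.
  case: (eqVneq w i) => [e|nwi] /=; first subst i.
    by rewrite subn0 addn0 subn1 addn1 prednK.
  by rewrite !subn0 !addn0.
have emu : mu m = (mu m' + wt v + wt w)%N by rewrite em !muD !muU.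
have ->: g m = rel3 g r m' k.
  rewrite /rel3; move: hpair; case: (pr r k) => a b /orP [] /eqP [-> ->].
    by rewrite -em.
  by rewrite -addmA (addmC U_(w)%MM) addmA -em.
apply: rel3_other => // k' nk; apply: IH; rewrite /rel3 !muD !muU.
have := hlt k' (mem3 k'); rewrite nk /= => hk'.
rewrite -addnA; apply: (@leq_trans (mu m)); last by rewrite -ltnS.
by rewrite emu -addnA ltn_add2l.
Qed.

End Uniq.

Lemma lo_lt5 v : (lo v < 5)%N. Proof. by case: v => [[|[|[|[|[|[|[|[|[|[|]]]]]]]]]] ]. Qed.
Lemma hi_lt5 v : (hi v < 5)%N. Proof. by case: v => [[|[|[|[|[|[|[|[|[|[|]]]]]]]]]] ]. Qed.
Lemma lo_neq_hi v : lo v != hi v. Proof. by case: v => [[|[|[|[|[|[|[|[|[|[|]]]]]]]]]] ]. Qed.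

Section Param.
Variable C : numFieldType.
Notation PP := {mpoly C[10]}.
Variable rk : nat -> nat.
Variable zl : nat.
Variable zv : 'I_10.

Definition uix (l : nat) : 'I_10 := inord (rk l).
Definition vix (l : nat) : 'I_10 := inord (5 + rk l).
Definition Uf (l : nat) : PP := if (l == zl) || (l == 3%N) then 0 else 'X_(uix l).
Definition Vf (l : nat) : PP := 'X_(vix l).
Definition ppl (i j : nat) : PP := Uf i * Vf j - Uf j * Vf i.
Definition pp (v : 'I_10) : PP := ppl (lo v) (hi v).

Lemma ppl_anti i j : ppl j i = - ppl i j.
Proof. by rewrite /ppl opprB. Qed.

Lemma plucker (r : 'I_5) :
  pp (pr r k0).1 * pp (pr r k0).2 - pp (pr r k1).1 * pp (pr r k1).2
  + pp (pr r k2).1 * pp (pr r k2).2 = 0.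
Proof.
rewrite /pp /ppl.
move: (Uf 0) (Uf 1) (Uf 2) (Uf 3) (Uf 4) (Vf 0) (Vf 1) (Vf 2) (Vf 3) (Vf 4) =>
  a0 a1 a2 a3 a4 b0 b1 b2 b3 b4.
by case: r => [[|[|[|[|[|//]]]]] hr] /=; ring.
Qed.

Definition PPm (t : 'X_{1..10}) : PP := \prod_(v < 10) pp v ^+ t v.

Lemma PPmU t v : PPm (t + U_(v))%MM = PPm t * pp v.
Proof.
rewrite /PPm (bigD1 v) //= [in RHS](bigD1 v) //= mnmDE mnm1E eqxx addn1 exprS.
rewrite (eq_bigr (fun i => pp i ^+ t i)); last first.
  by move=> i ne; rewrite mnmDE mnm1E eq_sym (negbTE ne) addn0.
by rewrite -mulrA [LHS]mulrC.
Qed.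

Definition gE (n : nat) (g : 'X_{1..10}) (t : 'X_{1..10}) : C :=
  if mdeg t == n then (PPm t)@_g else 0.

Definition E (n : nat) (g : 'X_{1..10}) : PP :=
  \sum_(t : 'X_{1..10 < n.+1}) (gE n g t / (mfact t)%:R) *: 'X_[t].

Lemma G_E n g t : G (E n g) t = gE n g t.
Proof.
rewrite /G; case: (ltnP (mdeg t) n.+1) => ht.
  by rewrite /E (mcoeff_mpoly (fun m => gE n g m / (mfact m)%:R)) // divfK // mfact_neq0.
rewrite /E raddf_sum big1 ?mul0r.
  by rewrite /gE; case: eqP => // e; move: ht; rewrite e ltnn.
case=> t' ht' _ /=; rewrite mcoeffZ mcoeffX.
case: eqP => [e|]; last by rewrite mulr0.
by move: ht'; rewrite e ltnNge ht.
Qed.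

Lemma E_rel n g : RelG (G (E n g)).
Proof.
move=> r m; rewrite /rel3 !G_E /gE !mdegD !mdeg1.
case: eqP => _; last by rewrite subrr addr0.
rewrite !PPmU -!mcoeffB -mcoeffD -!mulrA -mulrBr -mulrDr.
by rewrite plucker mulr0 mcoeff0.
Qed.

Lemma E_annih n g : annihilated (E n g).
Proof. exact/annihilatedE/E_rel. Qed.

Lemma G_eq0 (F : PP) t : (G F t == 0) = (F@_t == 0).
Proof. by rewrite /G mulf_eq0 (negbTE (mfact_neq0 C t)) orbF. Qed.

Lemma G_lin (F1 F2 : PP) c t : G (F1 + c *: F2) t = G F1 t + c * G F2 t.
Proof. by rewrite /G mcoeffD mcoeffZ mulrDl mulrA. Qed.

Hypothesis hz0 : pp zv = 0.

Lemma PPm_z (t : 'X_{1..10}) : (0 < t zv)%N -> PPm t = 0.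
Proof.
move=> h; rewrite /PPm (bigD1 zv) //= hz0 expr0n.
by rewrite (negbTE (lt0n_neq0 h)) mul0r.
Qed.

Lemma E_supp n g t : t \in msupp (E n g) -> t zv = 0%N /\ mdeg t = n.
Proof.
rewrite mcoeff_msupp -G_eq0 G_E /gE; case: (eqVneq (mdeg t) n) => [-> h|_]; last by rewrite eqxx.
split=> //.
apply/eqP; rewrite -leqn0 leqNgt; apply/negP => /PPm_z e.
by move: h; rewrite e mcoeff0 eqxx.
Qed.

Lemma E_indep n g : indep_of zv (E n g).
Proof. by move=> t /E_supp []. Qed.

Variable y : 'I_10.
Variable dl : 'X_{1..10}.
Hypothesis hy : pp y = 'X_[dl].

Lemma E_deriv n g : mderiv y (E n.+1 (g + dl)%MM) = E n g.
Proof.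
apply/mpolyP => t.
apply: (mulIf (mfact_neq0 C t)); rewrite -/(G (E n g) t) G_E.
rewrite mcoeff_mderiv -[_ *+ _]mulr_natr -mulrA -natrM mulnC -mfactU -/(G _ _) G_E.
rewrite /gE mdegD mdeg1 addn1 eqSS PPmU hy addmC mcoeffMX.
by case: eqP.
Qed.

End Param.


Lemma ltm_pair (a b c d : 'I_10) : (val a < val b)%N -> (val a < val c)%N ->
  (val a < val d)%N -> ((U_(c) + U_(d))%MM < (U_(a) + U_(b))%MM :> 'X_{1..10})%O.
Proof.
move=> ab ac ad; apply/ltmcP; first by rewrite !mdegD !mdeg1.
exists a.
  move=> j ja; rewrite !mnmDE !mnm1E.
  have nj x : (val a < val x)%N -> (x == j) = false.
    by move=> ax; apply/negbTE; apply: contraTneq ax => ->; rewrite -leqNgt ltnW.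
  rewrite (nj _ ab) (nj _ ac) (nj _ ad); suff -> : (a == j) = false by [].
  by apply/negbTE; apply: contraTneq ja => ->; rewrite ltnn.
rewrite !mnmDE !mnm1E eqxx.
have nj x : (val a < val x)%N -> (x == a) = false.
  by move=> ax; apply/negbTE; apply: contraTneq ax => ->; rewrite ltnn.
by rewrite (nj _ ac) (nj _ ad).
Qed.

Section Lead.
Variable C : numFieldType.
Variable rk : nat -> nat.
Variable zl : nat.
Variable zv : 'I_10.
Local Notation pp := (pp C rk zl).
Local Notation ppl := (ppl C rk zl).
Local Notation Uf := (Uf C rk zl).
Local Notation uix := (uix rk).
Local Notation vix := (vix rk).
Local Notation fstl := (fstl rk).
Local Notation sndl := (sndl rk).

Hypothesis hrk5 : forall l, (l < 5)%N -> (rk l < 5)%N.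
Hypothesis hrkinj : forall l l', (l < 5)%N -> (l' < 5)%N -> rk l = rk l' -> l = l'.
Hypothesis hfst : forall v, v != zv -> (fstl v != zl) && (fstl v != 3%N).
Hypothesis hzlab : ((lo zv == zl) || (lo zv == 3%N)) && ((hi zv == zl) || (hi zv == 3%N)).

Lemma uixE l : (l < 5)%N -> nat_of_ord (uix l) = rk l.
Proof. by move=> h; rewrite /uix inordK // (leq_trans (hrk5 h)). Qed.
Lemma vixE l : (l < 5)%N -> nat_of_ord (vix l) = (5 + rk l)%N.
Proof. by move=> h; rewrite /vix inordK // ltn_add2l hrk5. Qed.

Lemma mlead_ppl i j : (i < 5)%N -> (j < 5)%N -> (i != zl) && (i != 3%N) ->
  (rk i < rk j)%N -> mlead (ppl i j) = (U_(uix i) + U_(vix j))%MM.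
Proof.
move=> hi hj /andP [hi1 hi2] hij.
rewrite /ppl /Uf (negbTE hi1) (negbTE hi2) /=.
case: ifP => _; first by rewrite mul0r subr0 /Vf -mpolyXD mleadXm.
rewrite /Vf -!mpolyXD mleadDl ?mleadN !mleadXm //.
apply: ltm_pair => /=; rewrite ?vixE ?uixE //.
- by rewrite (leq_trans (hrk5 hi)) // leq_addr.
- by rewrite (leq_trans (hrk5 hi)) // leq_addr.
Qed.

Definition LT (v : 'I_10) : 'X_{1..10} := (U_(uix (fstl v)) + U_(vix (sndl v)))%MM.

Lemma fst_lt5 v : (fstl v < 5)%N.
Proof. by rewrite /fstl; case: ifP => _; rewrite ?lo_lt5 ?hi_lt5. Qed.
Lemma snd_lt5 v : (sndl v < 5)%N.
Proof. by rewrite /sndl; case: ifP => _; rewrite ?lo_lt5 ?hi_lt5. Qed.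

Lemma rk_lohi v : rk (lo v) != rk (hi v).
Proof.
apply: contra (lo_neq_hi v) => /eqP e; apply/eqP.
by apply: hrkinj e; rewrite ?lo_lt5 ?hi_lt5.
Qed.

Lemma mlead_pp v : v != zv -> mlead (pp v) = LT v.
Proof.
move=> nv; have := hfst nv; rewrite /LT /pp /fstl /sndl.
case: ifP => h hf.
  by rewrite mlead_ppl ?lo_lt5 ?hi_lt5.
rewrite -[ppl _ _]opprK -ppl_anti mleadN mlead_ppl ?lo_lt5 ?hi_lt5 //.
by rewrite ltn_neqAle eq_sym rk_lohi leqNgt h.
Qed.

Lemma pp_neq0 v : v != zv -> pp v != 0.
Proof.
move=> nv; apply/eqP => e; have := mlead_pp nv; rewrite e mlead0 => /eqP.
by rewrite eq_sym /LT mnmD_eq0 mnm1_eq0.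
Qed.

Lemma pp_z : pp zv = 0.
Proof.
move: hzlab; rewrite /pp /ppl /Uf => /andP [-> ->].
by rewrite !mul0r subrr.
Qed.

Definition gam (t : 'X_{1..10}) := (\sum_(v < 10) mlead (pp v ^+ t v))%MM.

Lemma diag (t : 'X_{1..10}) : t zv = 0%N -> (PPm C rk zl t)@_(gam t) != 0.
Proof.
move=> tz; rewrite /PPm /gam mleadc_prod; apply/prodf_neq0 => v _.
rewrite mleadc_eq0; case: (eqVneq v zv) => [->|nv].
  by rewrite tz expr0 oner_neq0.
by rewrite expf_neq0 // pp_neq0.
Qed.

Lemma tri (t g : 'X_{1..10}) : (PPm C rk zl t)@_g != 0 -> (g <= gam t)%O.
Proof.
rewrite -mcoeff_msupp => /msupp_le_mlead h.
by apply: (le_trans h); apply: mlead_prod_le.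
Qed.

Lemma gamE (t : 'X_{1..10}) i : t zv = 0%N -> gam t i = (\sum_(v < 10) t v * LT v i)%N.
Proof.
move=> tz; rewrite /gam mnm_sumE; apply: eq_bigr => v _.
case: (eqVneq v zv) => [->|nv]; first by rewrite tz expr0 mlead1 mnm0E.
by rewrite mleadX ?pp_neq0 // mlead_pp // mulmnE mulnC.
Qed.

Lemma LT_u v l : (l < 5)%N -> LT v (uix l) = (fstl v == l).
Proof.
move=> hl; rewrite /LT mnmDE !mnm1E.
have -> : (vix (sndl v) == uix l) = false.
  apply/negbTE; rewrite -val_eqE /= vixE ?snd_lt5 // uixE //.
  by apply/eqP => e; have := hrk5 hl; rewrite -e ltnNge leq_addr.
rewrite addn0 -val_eqE /= !uixE ?fst_lt5 //.
congr (nat_of_bool _); apply/idP/idP => /eqP h; apply/eqP; last by rewrite h.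
exact: (hrkinj (fst_lt5 v) hl h).
Qed.


Lemma LT_v v l : (l < 5)%N -> LT v (vix l) = (sndl v == l).
Proof.
move=> hl; rewrite /LT mnmDE !mnm1E.
have -> : (uix (fstl v) == vix l) = false.
  apply/negbTE; rewrite -val_eqE /= vixE // uixE ?fst_lt5 //.
  by apply/eqP => e; have := hrk5 (fst_lt5 v); rewrite e ltnNge leq_addr.
rewrite add0n -val_eqE /= !vixE ?snd_lt5 //.
congr (nat_of_bool _); apply/idP/idP => /eqP h; apply/eqP; last by rewrite h.
by apply: (hrkinj (snd_lt5 v) hl); apply/eqP; rewrite -(eqn_add2l 5); apply/eqP.
Qed.

Local Open Scope nat_scope.
Local Notation chainb := (chainb rk zv).
Local Notation cmpb := (cmpb rk).

Definition Nst (t : 'X_{1..10}) p q :=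
  (\sum_(v < 10) t v * ((rk (fstl v) < p) && (rk (sndl v) < q)))%N.

Lemma sum_pick (l0 : nat) (P : nat -> bool) : (l0 < 5)%N ->
  (\sum_(l < 5) P l * (l0 == l))%N = P l0.
Proof.
move=> h; rewrite (bigD1 (Ordinal h)) //= eqxx muln1 big1 ?addn0 // => l ne.
suff -> : (l0 == l) = false by rewrite muln0.
by apply/negbTE; apply: contra ne => /eqP e; apply/eqP/val_inj.
Qed.

Lemma NA_E (t : 'X_{1..10}) p : t zv = 0%N ->
  (\sum_(l < 5) (rk l < p) * gam t (uix l))%N = Nst t p 5.
Proof.
move=> tz.
rewrite (eq_bigr (fun l : 'I_5 => \sum_(v < 10) (rk l < p) * (t v * (fstl v == l)))%N);
  last by move=> l _; rewrite gamE // big_distrr; apply: eq_bigr => v _; rewrite LT_u.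
rewrite exchange_big /Nst; apply: eq_bigr => v _.
rewrite (eq_bigr (fun l : 'I_5 => t v * ((rk l < p) * (fstl v == l))))%N;
  last by move=> l _; rewrite mulnCA.
by rewrite -big_distrr /= (sum_pick (fun l => rk l < p)) ?fst_lt5 // hrk5 ?snd_lt5 ?andbT.
Qed.

Lemma NB_E (t : 'X_{1..10}) q : t zv = 0%N ->
  (\sum_(l < 5) (rk l < q) * gam t (vix l))%N = Nst t 5 q.
Proof.
move=> tz.
rewrite (eq_bigr (fun l : 'I_5 => \sum_(v < 10) (rk l < q) * (t v * (sndl v == l)))%N);
  last by move=> l _; rewrite gamE // big_distrr; apply: eq_bigr => v _; rewrite LT_v.
rewrite exchange_big /Nst; apply: eq_bigr => v _.
rewrite (eq_bigr (fun l : 'I_5 => t v * ((rk l < q) * (sndl v == l))))%N;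
  last by move=> l _; rewrite mulnCA.
by rewrite -big_distrr /= (sum_pick (fun l => rk l < q)) ?snd_lt5 // hrk5 ?fst_lt5.
Qed.

Lemma chain_comp (t : 'X_{1..10}) v w : chainb t -> (0 < t v)%N -> (0 < t w)%N -> cmpb v w.
Proof.
rewrite /chainb => /andP [_ /forallP hv] tv tw.
by have /forallP /(_ w) /implyP := hv v; apply; rewrite tv tw.
Qed.

Lemma Nst_chain (t : 'X_{1..10}) p q : chainb t ->
  Nst t p q = minn (Nst t p 5) (Nst t 5 q).
Proof.
move=> ch.
have r5 v : (rk (fstl v) < 5)%N /\ (rk (sndl v) < 5)%N.
  by split; apply: hrk5; rewrite ?fst_lt5 ?snd_lt5.
case: (boolP [exists v, [&& 0 < t v, rk (fstl v) < p & ~~ (rk (sndl v) < q)]%N]).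
  case/existsP => v /and3P [tv fp sq].
  have hw w : (0 < t w)%N -> (rk (sndl w) < q)%N -> (rk (fstl w) < p)%N.
    move=> tw sw; have := chain_comp ch tv tw; rewrite /cmpb.
    case/orP => /andP [h1 h2].
      by move: sq; rewrite -leqNgt => sq; move: (leq_trans sq h2); rewrite leqNgt sw.
    exact: leq_ltn_trans h1 fp.
  have e1 : Nst t p q = Nst t 5 q.
    apply: eq_bigr => w _; case: (posnP (t w)) => [->|tw]; first by rewrite !mul0n.
    have [-> _] := r5 w; case sw: (rk (sndl w) < q)%N; last by rewrite !andbF.
    by rewrite hw.
  have le1 : (Nst t 5 q <= Nst t p 5)%N.
    apply: leq_sum => w _; case: (posnP (t w)) => [->|tw]; first by rewrite !mul0n.
    have [-> ->] := r5 w; case sw: (rk (sndl w) < q)%N; last by rewrite muln0.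
    by rewrite hw.
  by rewrite e1 (minn_idPr le1).
rewrite negb_exists => /forallP hn.
have hv v : (0 < t v)%N -> (rk (fstl v) < p)%N -> (rk (sndl v) < q)%N.
  by move=> tv fp; have := hn v; rewrite tv fp /= negbK.
have e1 : Nst t p q = Nst t p 5.
  apply: eq_bigr => w _; case: (posnP (t w)) => [->|tw]; first by rewrite !mul0n.
  have [_ ->] := r5 w; case fw: (rk (fstl w) < p)%N => //=.
  by rewrite hv.
have le1 : (Nst t p 5 <= Nst t 5 q)%N.
  apply: leq_sum => w _; case: (posnP (t w)) => [->|tw]; first by rewrite !mul0n.
  have [-> ->] := r5 w; case fw: (rk (fstl w) < p)%N; last by rewrite muln0.
  by rewrite hv.
by rewrite e1 (minn_idPl le1).
Qed.

Lemma ind4 (f s p q : nat) :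
  (((f == p) && (s == q)) + ((f < p) && (s < q.+1)) + ((f < p.+1) && (s < q)))%N =
  (((f < p.+1) && (s < q.+1)) + ((f < p) && (s < q)))%N.
Proof.
rewrite !ltnS; case: (ltngtP f p) => _; case: (ltngtP s q) => _ //=.
Qed.

Hypothesis hpinj : forall v w, v != w ->
  (rk (fstl v) != rk (fstl w)) || (rk (sndl v) != rk (sndl w)).

Lemma Nst_rec (t : 'X_{1..10}) v : t zv = 0%N ->
  (t v + Nst t (rk (fstl v)) (rk (sndl v)).+1 + Nst t (rk (fstl v)).+1 (rk (sndl v)))%N =
  (Nst t (rk (fstl v)).+1 (rk (sndl v)).+1 + Nst t (rk (fstl v)) (rk (sndl v)))%N.
Proof.
move=> tz.
have -> : t v = (\sum_(w < 10) t w * (w == v))%N.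
  rewrite (bigD1 v) //= eqxx muln1 big1 ?addn0 // => w /negbTE ->.
  by rewrite muln0.
rewrite /Nst -!big_split /=; apply: eq_bigr => w _.
case: (posnP (t w)) => [->|tw]; first by rewrite !mul0n.
rewrite -!mulnDr; congr (_ * _)%N.
have -> : (w == v) = ((rk (fstl w) == rk (fstl v)) && (rk (sndl w) == rk (sndl v))).
  case: (eqVneq w v) => [->|nwv]; first by rewrite !eqxx.
  by case/orP: (hpinj nwv) => /negbTE ->; rewrite ?andbF.
exact: ind4.
Qed.

Lemma chain_inj (s t : 'X_{1..10}) : chainb s -> chainb t -> gam s = gam t -> s = t.
Proof.
move=> cs ct eg.
have sz : s zv = 0%N by case/andP: cs => /eqP.
have tz : t zv = 0%N by case/andP: ct => /eqP.
have eN p q : Nst s p q = Nst t p q.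
  by rewrite (Nst_chain p q cs) (Nst_chain p q ct) -!NA_E // -!NB_E // eg.
apply/mnmP => v.
have h1 := Nst_rec v sz; have h2 := Nst_rec v tz.
rewrite -!eN in h2.
by apply/eqP; rewrite -(eqn_add2r (Nst s (rk (fstl v)) (rk (sndl v)).+1 + Nst s (rk (fstl v)).+1 (rk (sndl v)))) !addnA h1 h2.
Qed.

Lemma mdeg_gam (t : 'X_{1..10}) : t zv = 0%N -> mdeg (gam t) = (2 * mdeg t)%N.
Proof.
move=> tz; rewrite /gam mdeg_sum mdegE big_distrr; apply: eq_bigr => v _ /=.
case: (eqVneq v zv) => [->|nv]; first by rewrite tz expr0 mlead1 mdeg0 muln0.
by rewrite mleadX ?pp_neq0 // mdegMn mlead_pp // /LT mdegD !mdeg1 mulnC.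
Qed.

End Lead.


Lemma lin3 (V : comRingType) (a1 a2 a3 b1 b2 b3 c : V) :
  a1 - a2 + a3 = 0 -> b1 - b2 + b3 = 0 ->
  a1 + c * b1 - (a2 + c * b2) + (a3 + c * b3) = 0.
Proof.
move=> e1 e2; have -> : a1 + c * b1 - (a2 + c * b2) + (a3 + c * b3) =
   (a1 - a2 + a3) + c * (b1 - b2 + b3) by ring.
by rewrite e1 e2 mulr0 addr0.
Qed.

Lemma RelG_lin (C : numFieldType) (F1 F2 : {mpoly C[10]}) c :
  RelG (G F1) -> RelG (G F2) -> RelG (G (F1 + c *: F2)).
Proof.
move=> h1 h2 r m; rewrite /rel3 !G_lin; exact: lin3 (h1 r m) (h2 r m).
Qed.

Lemma indep_lin (C : numFieldType) z (F1 F2 : {mpoly C[10]}) c :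
  indep_of z F1 -> indep_of z F2 -> indep_of z (F1 + c *: F2).
Proof.
move=> h1 h2 m /msuppD_le; rewrite mem_cat => /orP [/h1 //|/msuppZ_le /h2 //].
Qed.

Section Main.
Variable C : numFieldType.
Notation PP := {mpoly C[10]}.
Variable rk : nat -> nat.
Variable zl : nat.
Variable zv : 'I_10.
Variable y : 'I_10.
Variable dl : 'X_{1..10}.
Local Notation chainb := (chainb rk zv).
Local Notation gam := (gam C rk zl).

Hypothesis hrk5 : forall l, (l < 5)%N -> (rk l < 5)%N.
Hypothesis hrkinj : forall l l', (l < 5)%N -> (l' < 5)%N -> rk l = rk l' -> l = l'.
Hypothesis hfst : forall v, v != zv -> (fstl rk v != zl) && (fstl rk v != 3%N).
Hypothesis hzlab : ((lo zv == zl) || (lo zv == 3%N)) && ((hi zv == zl) || (hi zv == 3%N)).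
Hypothesis hpinj : forall v w, v != w ->
  (rk (fstl rk v) != rk (fstl rk w)) || (rk (sndl rk v) != rk (sndl rk w)).
Hypothesis hred : redok rk zv.
Hypothesis hy : pp C rk zl y = 'X_[dl].

Definition Int (F : PP) :=
  exists H : PP, [/\ indep_of zv H, annihilated H & mderiv y H = F].

Lemma Int_lin F1 F2 c : Int F1 -> Int F2 -> Int (F1 + c *: F2).
Proof.
move=> [H1 [i1 a1 d1]] [H2 [i2 a2 d2]]; exists (H1 + c *: H2); split.
- exact: indep_lin.
- by apply/annihilatedE/RelG_lin; apply/annihilatedE.
- by rewrite mderivD mderivZ d1 d2.
Qed.

Lemma Int0 : Int 0.
Proof.
exists 0; split; first by move=> m; rewrite msupp0.
  by apply/annihilatedE => r m; rewrite /rel3 /G !mcoeff0 !mul0r subrr addr0.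
exact: mderiv0.
Qed.

Lemma hz0 : pp C rk zl zv = 0.
Proof. by apply: pp_z. Qed.

Lemma Int_E s : Int (E C rk zl (mdeg s) (gam s)).
Proof.
exists (E C rk zl (mdeg s).+1 (gam s + dl)%MM); split.
- exact: E_indep hz0 _ _.
- exact: E_annih.
- exact: E_deriv.
Qed.

Lemma zeroF (F : PP) : annihilated F -> indep_of zv F ->
  (forall t, chainb t -> G F t = 0) -> F = 0.
Proof.
move=> aF iF hc.
have hG : forall m, G F m = 0.
  apply: (uniq_G hred) => //; first exact/annihilatedE.
  move=> m mz; apply/eqP; rewrite G_eq0 mcoeff_eq0; apply/negP => /iF e.
  by move: mz; rewrite e.
apply/mpolyP => m; rewrite mcoeff0; apply/eqP; rewrite -G_eq0; exact/eqP.
Qed.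

Variable D : nat.
Local Notation B := (2 * D).+1%N.
Definition cnt (g : 'X_{1..10}) := #|[set m : 'X_{1..10 < B} | (g < bmnm m)%O]|.

Lemma cnt_lt g1 g2 : (g1 < g2)%O -> (mdeg g2 < B)%N -> (cnt g2 < cnt g1)%N.
Proof.
move=> lt12 b2; apply: proper_card; apply/properP; split.
  by apply/subsetP => m; rewrite !inE => h; exact: lt_trans h.
by exists (BMultinom b2); rewrite !inE //= ltxx.
Qed.

Lemma cnt_eq g1 g2 : cnt g1 = cnt g2 -> (mdeg g1 < B)%N -> (mdeg g2 < B)%N -> g1 = g2.
Proof.
move=> e b1 b2; case: (ltgtP g1 g2) => // h.
  by have := cnt_lt h b2; rewrite e ltnn.
by have := cnt_lt h b1; rewrite e ltnn.
Qed.

Lemma gam_bound t : chainb t -> (mdeg t <= D)%N -> (mdeg (gam t) < B)%N.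
Proof.
move=> /andP [/eqP tz _] h; rewrite (mdeg_gam C hrk5 hrkinj hfst tz) ltnS leq_mul2l h orbT //.
Qed.

Lemma main_ind k : forall F : PP, annihilated F -> indep_of zv F ->
  (forall m, m \in msupp F -> mdeg m <= D)%N ->
  (forall t, chainb t -> G F t != 0 -> (cnt (gam t) < k)%N) -> Int F.
Proof.
elim: k => [|k IH] F aF iF dF hF.
  have -> : F = 0; last exact: Int0.
  by apply: zeroF => // t ct; apply/eqP; apply: contraT => h; have := hF t ct h.
case: (boolP (has (fun s => [&& chainb s, G F s != 0 & cnt (gam s) == k]) (msupp F))).
  case/hasP => s sF /and3P [cs Gs /eqP ck].
  have sz : s zv = 0%N by case/andP: cs => /eqP.
  set Es := E C rk zl (mdeg s) (gam s).
  have GEs : G Es s != 0 by rewrite G_E /gE eqxx (diag C hrk5 hrkinj hfst sz).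
  set lam := G F s / G Es s.
  have eF : F = (F + (- lam) *: Es) + lam *: Es by rewrite scaleNr addrNK.
  rewrite eF; apply: Int_lin; last exact: Int_E.
  have ds := dF s sF.
  apply: IH.
  - by apply/annihilatedE/RelG_lin; apply/annihilatedE => //; exact: E_annih.
  - by apply: indep_lin => //; apply: E_indep hz0 _ _.
  - move=> m /msuppD_le; rewrite mem_cat => /orP [/dF //|/msuppZ_le /E_supp].
    by move=> /(_ zv hz0) [_ ->].
  - move=> t ct; rewrite G_lin.
    case: (eqVneq t s) => [->|nts].
      by rewrite /lam mulNr divfK // subrr eqxx.
    have tz : t zv = 0%N by case/andP: ct => /eqP.
    case: (eqVneq (G Es t) 0) => [->|GEt _].
      rewrite mulr0 addr0 => GFt.
      have tF : t \in msupp F by rewrite mcoeff_msupp -G_eq0.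
      have := hF t ct GFt; rewrite ltnS leq_eqVlt => /orP [/eqP e|//].
      have := cnt_eq (etrans e (esym ck)) (gam_bound ct (dF t tF)) (gam_bound cs ds).
      by move=> /(chain_inj hrk5 hrkinj hfst hpinj ct cs) ets; move: nts; rewrite ets eqxx.
    move: GEt; rewrite G_E /gE; case: (eqVneq (mdeg t) (mdeg s)) => [mt|]; last by rewrite eqxx.
    move=> /tri le; rewrite -ck; apply: cnt_lt; last first.
      by apply: gam_bound => //; rewrite mt.
    rewrite lt_neqAle le andbT; apply: contra nts => /eqP e.
    by apply/eqP; exact: (chain_inj (C:=C) hrk5 hrkinj hfst hpinj ct cs (esym e)).
move=> hn; apply: IH => // t ct GFt.
have tF : t \in msupp F by rewrite mcoeff_msupp -G_eq0.
have := hF t ct GFt; rewrite ltnS leq_eqVlt => /orP [/eqP e|//].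
by move/hasPn: hn => /(_ t tF); rewrite ct GFt e eqxx.
Qed.

End Main.


Definition rkA (zl l : nat) : nat :=
  if l == 3 then 4 else if l == zl then 3 else (l - (zl < l) - (3 < l))%N.

Definition c_rk (zl : nat) :=
  all (fun l => rkA zl l < 5)%N (iota 0 5) &&
  all (fun l => all (fun l' => (rkA zl l == rkA zl l') ==> (l == l')) (iota 0 5)) (iota 0 5).
Definition c_fst (zl : nat) (zv : 'I_10) :=
  all (fun v => (v != zv) ==> ((fstl (rkA zl) v != zl) && (fstl (rkA zl) v != 3%N))) ords10.
Definition c_pinj (zl : nat) := all (fun v => all (fun w => (v != w) ==>
  ((rkA zl (fstl (rkA zl) v) != rkA zl (fstl (rkA zl) w)) ||
   (rkA zl (sndl (rkA zl) v) != rkA zl (sndl (rkA zl) w)))) ords10) ords10.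
Definition c_y (zl : nat) (y : 'I_10) := (hi y == 3%N) && (lo y != zl) && (lo y != 3%N).
Definition c_z (zl : nat) (zv : 'I_10) :=
  ((lo zv == zl) || (lo zv == 3%N)) && ((hi zv == zl) || (hi zv == 3%N)).

Lemma case_gen (C : numFieldType) (zl : nat) (zv y : 'I_10) :
  c_rk zl -> c_fst zl zv -> c_pinj zl -> c_y zl y -> c_z zl zv -> redok (rkA zl) zv ->
  forall F : {mpoly C[10]}, indep_of zv F -> annihilated F ->
  exists Q : {mpoly C[10]}, [/\ indep_of zv Q, mderiv y Q = F & annihilated Q].
Proof.
move=> /andP [/allP r5 /allP rinj] /allP hf /allP hp /andP [/andP [/eqP hy3 hy1] hy2] hz hr F iF aF.
have hrk5 : forall l, (l < 5)%N -> (rkA zl l < 5)%N.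
  by move=> l hl; apply: r5; rewrite mem_iota.
have hrkinj : forall l l', (l < 5)%N -> (l' < 5)%N -> rkA zl l = rkA zl l' -> l = l'.
  move=> l l' hl hl' e.
  have m1 : l \in iota 0 5 by rewrite mem_iota.
  have m2 : l' \in iota 0 5 by rewrite mem_iota.
  have /allP h2 := rinj l m1.
  by have := h2 l' m2; rewrite e eqxx /= => /eqP.
have hfst : forall v, v != zv -> (fstl (rkA zl) v != zl) && (fstl (rkA zl) v != 3%N).
  by move=> v nv; have /implyP := hf v (mem10 v); apply.
have hpinj : forall v w, v != w ->
    (rkA zl (fstl (rkA zl) v) != rkA zl (fstl (rkA zl) w)) ||
    (rkA zl (sndl (rkA zl) v) != rkA zl (sndl (rkA zl) w)).
  by move=> v w nvw; have /allP /(_ w (mem10 w)) /implyP := hp v (mem10 v); apply.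
have hy : pp C (rkA zl) zl y = 'X_[(U_(uix (rkA zl) (lo y)) + U_(vix (rkA zl) 3))%MM].
  rewrite /pp /ppl /Uf hy3 eqxx orbT (negbTE hy1) (negbTE hy2) /=.
  by rewrite mul0r subr0 /Vf mpolyXD.
have [H [iH aH dH]] := main_ind hrk5 hrkinj hfst hz hpinj hr hy
  (D := msize F) (k := #|{: 'X_{1..10 < (2 * msize F).+1}}|.+1) aF iF
  (fun m hm => ltnW (msize_mdeg_lt hm)) (fun t _ _ => max_card _).
by exists H.
Qed.

Unset Implicit Arguments.

Theorem mainTheorem8 (R : realType) (a b : nat)
  (ha : (1 <= a <= 3)%N) (hb : (1 <= b <= 3)%N) (hab : a <> b)
  (P : {mpoly R[i][10]}) :
  indep_of (vxx a 4) P -> annihilated P ->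
  exists Q : {mpoly R[i][10]},
    [/\ indep_of (vxx a 4) Q, d2 b 4 Q = P & annihilated Q].
Proof.
rewrite /d2; have [e12 e13 e14 e23] := vxxE; have [e24 e34] := vxxE'.
case: a ha hab => [|[|[|[|a]]]] // _; case: b hb => [|[|[|[|b]]]] // _ hab //;
  rewrite ?e14 ?e24 ?e34;
  first [ apply: (@case_gen _ 0%N); by [] | apply: (@case_gen _ 1%N); by []
        | apply: (@case_gen _ 2%N); by [] ].
Qed.
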